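(* For every odd integer $\ell\ge 7$ there exists a binary palindrome of length $\ell$ whose critical exponent is exactly $\tfrac{7}{3}$.
   Context: A word $x=x[1..n]$ has period $q$ if $x[i]=x[i+q]$ for $1\le i\le n-q$. For integers $p>q\ge1$, $x$ is a $(p/q)$-power if it has length $p$ and period $q$. The exponent $\exp(w)$ of a finite nonempty word $w$ is the largest rational $p/q$ such that $w$ is a $(p/q)$-power (with $w$ of length $p$ and period $q$, $1\le q\le p$). The critical exponent of $w$ is the maximum of $\exp(w')$ over all nonempty factors $w'$ of $w$. A palindrome is a word equal to its reversal. *)

(* Defs.v *)
From mathcomp Require Import all_boot all_order all_algebra.
Set Implicit Arguments. Unset Strict Implicit. Unset Printing Implicit Defensive.
Import Order.TTheory GRing.Theory Num.Theory.
Local Open Scope ring_scope.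

Definition has_period (w : seq bool) (q : nat) : bool :=
  [forall i : 'I_(size w), (i + q < size w)%N ==> (nth false w i == nth false w (i + q))].

(* The exponent of w: the largest rational |w|/q over periods 1 <= q <= |w|.
   (0 for the empty word; every nonempty word has period |w|.) *)
Definition exponent (w : seq bool) : rat :=
  foldr Num.max 0
    [seq ((size w)%:R / q%:R : rat) | q <- iota 1 (size w) & has_period w q].

Definition factors (w : seq bool) : seq (seq bool) :=
  [seq take j (drop i w) | i <- iota 0 (size w), j <- iota 1 (size w - i)].

Definition critical_exponent (w : seq bool) : rat :=
  foldr Num.max 0 [seq exponent u | u <- factors w].

Definition palindrome (w : seq bool) : bool := rev w == w.

(* Main.v *)
Require Import Defs.
From mathcomp Require Import all_boot all_order all_algebra.
From mathcomp Require Import zify.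
Set Implicit Arguments. Unset Strict Implicit.

Fixpoint tmf (k n : nat) : bool :=
  match k with 0 => false | k'.+1 => if n is 0 then false else xorb (odd n) (tmf k' n./2) end.

Lemma tmf_stable k k' n : (n <= k)%N -> (n <= k')%N -> tmf k n = tmf k' n.
Proof.
elim: k k' n => [|k IH] [|k'] [|n] // h1 h2.
have hh : (n.+1./2 <= n)%N by rewrite leq_half_double; lia.
rewrite /=; congr xorb; apply: IH.
  exact: leq_trans hh _.
exact: leq_trans hh _.
Qed.

Definition tm n := tmf n n.

Lemma tm_rec n : tm n.+1 = xorb (odd n.+1) (tm (n.+1)./2).
Proof.
have hh : (n.+1./2 <= n)%N by rewrite leq_half_double; lia.
rewrite /tm [tmf n.+1 _]/=; congr xorb; apply: tmf_stable => //.
Qed.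

Lemma tm_even m : tm (2 * m) = tm m.
Proof.
case: m => [//|m].
have -> : (2 * m.+1 = (2 * m).+1.+1)%N by lia.
rewrite tm_rec mul2n -doubleS doubleK.
have -> : odd (m.+1).*2 = false by rewrite odd_double.
done.
Qed.

Lemma tm_odd m : tm (2 * m + 1) = ~~ tm m.
Proof.
rewrite addn1 tm_rec mul2n (half_bit_double m true) /= odd_double.
by case: (tm m).
Qed.

Lemma parity n : exists k, n = (2 * k)%N \/ n = (2 * k + 1)%N.
Proof. exists n./2. have := odd_double_half n. case: (odd n) => /= <-; lia. Qed.

Lemma tm_pair m : tm (2 * m) != tm (2 * m + 1).
Proof. by rewrite tm_even tm_odd; case: (tm m). Qed.

Lemma tm_pairS m : tm (2 * m) != tm (2 * m).+1.
Proof. by have := tm_pair m; rewrite addn1. Qed.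

Lemma alt_xor (f : nat -> bool) a t :
  (forall m, (m < t)%N -> f (a + m) != f (a + m).+1) -> f (a + t) = f a (+) odd t.
Proof.
elim: t => [|t IH] H; first by rewrite addn0 addbF.
rewrite addnS. have := H t (ltnSn t). rewrite IH; last by move=> m hm; apply: H; lia.
rewrite /=; by case: (f (a + t).+1); case: (f a); case: (odd t).
Qed.

Lemma tm_overlap_free p : (1 <= p)%N -> forall i,
  ~ (forall k, (k <= p)%N -> tm (i + k) = tm (i + k + p)).
Proof.
elim/ltn_ind: p => p IH hp i P.
have [r [hr|hr]] := parity p.
-
  have hq : (r < p)%N by lia.
  have Q : exists a, forall k, (k <= p)%N -> tm (2 * a + k) = tm (2 * a + k + p).
    have [a [ha|ha]] := parity i; first by exists a; rewrite -ha.
    exists a => k hk. case: k hk => [|k] hk.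
      have e1 := tm_pair a. have e2 := tm_pair (a + r).
      have := P 0 (leq0n _). rewrite !addn0 ha.
      have -> : (2 * a + 1 + p = 2 * (a + r) + 1)%N by lia.
      have -> : (2 * a + p = 2 * (a + r))%N by lia.
      move: e1 e2. move: (tm (2 * a)) (tm (2 * a+1)) (tm (2 * (a+r))) (tm (2 * (a+r)+1)).
      by do 4 case.
    have := P k (ltnW hk). rewrite ha.
    have -> : (2 * a + 1 + k = 2 * a + k.+1)%N by lia. done.
  case: Q => a Q.
  apply: (IH r hq _ a) => [|k hk]; first lia.
  have := Q (2 * k) (ltac:(lia)).
  have -> : (2 * a + 2 * k = 2 * (a + k))%N by lia.
  have -> : (2 * (a + k) + p = 2 * (a + k + r))%N by lia.
  by rewrite !tm_even.
-
  have D : forall m, (m < p)%N -> tm (i + p + m) != tm (i + p + m).+1.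
    move=> m hm. have [c [hc|hc]] := parity (i + p + m).
      by rewrite hc tm_pairS.
    have hd : tm (i + m) != tm (i + m).+1.
      have -> : (i + m = 2 * (c - r))%N by lia.
      by rewrite tm_pairS.
    have e1 := P m (ltnW hm). have e2 := P m.+1 hm.
    have -> : (i + p + m = i + m + p)%N by lia.
    have -> : ((i + m + p).+1 = i + m.+1 + p)%N by lia.
    by rewrite -e1 -e2 addnS.
  have := @alt_xor tm (i + p) p D.
  have -> : odd p by rewrite hr addn1 /= mul2n odd_double.
  rewrite P // addnC addbT. by case: (tm _).
Qed.
Definition zw (h j : nat) : bool := if (j <= h)%N then tm (6 + h - j) else tm (6 + j - h).

Definition per (f : nat -> bool) s n p :=
  forall k, (k + p < n)%N -> f (s + k) = f (s + k + p).

Lemma per_diff f s n p j : per f s n p -> (s <= j)%N -> (j + p + 1 < s + n)%N ->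
  f j != f j.+1 -> f (j + p) != f (j + p).+1.
Proof.
move=> P h1 h2 d.
have e1 := P (j - s) ltac:(lia). have e2 := P (j - s).+1 ltac:(lia).
have -> : (j + p = s + (j - s) + p)%N by lia.
have -> : ((s + (j - s) + p).+1 = s + (j - s).+1 + p)%N by lia.
rewrite -e1 -e2.
have -> : (s + (j - s) = j)%N by lia.
by have -> : (s + (j - s).+1 = j.+1)%N by lia.
Qed.

Lemma alt_overlap (f : nat -> bool) a :
  f a != f a.+1 -> f a.+1 != f a.+2 -> f a.+2 != f a.+3 -> f a.+3 != f a.+4 ->
  forall k, (k <= 2)%N -> f (a + k) = f (a + k + 2).
Proof.
move=> d0 d1 d2 d3 [|[|[|k]]] // _; rewrite ?addn0 ?addn1 ?addn2 ?addnS ?addn0 ?addn1 ?addn2;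
move: d0 d1 d2 d3; move: (f a) (f a.+1) (f a.+2) (f a.+3) (f a.+4); by do 5 case.
Qed.

Lemma zw_shift h j : (h <= j + 64)%N -> zw h j = zw 64 (j + 64 - h).
Proof.
move=> hj; rewrite /zw.
have -> : (j + 64 - h <= 64)%N = (j <= h)%N by apply/idP/idP; lia.
by case: ifP => hh; congr tm; lia.
Qed.

Lemma zw_OL h a p : (1 <= p)%N -> (a + 2 * p <= h)%N ->
  ~ (forall k, (k <= p)%N -> zw h (a + k) = zw h (a + k + p)).
Proof.
move=> hp ha P. apply: (@tm_overlap_free p hp (6 + h - (a + 2 * p))) => k hk.
have := P (p - k) ltac:(lia). rewrite /zw.
rewrite (_ : (a + (p - k) <= h)%N = true); last by apply/idP; lia.
rewrite (_ : (a + (p - k) + p <= h)%N = true); last by apply/idP; lia.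
have -> : (6 + h - (a + (p - k)) = 6 + h - (a + 2 * p) + k + p)%N by lia.
by have -> : (6 + h - (a + (p - k) + p) = 6 + h - (a + 2 * p) + k)%N by lia.
Qed.

Lemma zw_OR h a p : (1 <= p)%N -> (h < a)%N ->
  ~ (forall k, (k <= p)%N -> zw h (a + k) = zw h (a + k + p)).
Proof.
move=> hp ha P. apply: (@tm_overlap_free p hp (6 + a - h)) => k hk.
have := P k hk. rewrite /zw.
rewrite (_ : (a + k <= h)%N = false); last by apply/idP; lia.
rewrite (_ : (a + k + p <= h)%N = false); last by apply/idP; lia.
have -> : (6 + (a + k) - h = 6 + a - h + k)%N by lia.
by have -> : (6 + (a + k + p) - h = 6 + a - h + k + p)%N by lia.
Qed.

Lemma zw_HL h m : (2 * m + 1 <= h)%N -> zw h (h - 1 - 2 * m) != zw h (h - 2 * m).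
Proof.
move=> hm. rewrite /zw.
rewrite (_ : (h - 1 - 2 * m <= h)%N = true); last by apply/idP; lia.
rewrite (_ : (h - 2 * m <= h)%N = true); last by apply/idP; lia.
have -> : (6 + h - (h - 1 - 2 * m) = (2 * (3 + m)).+1)%N by lia.
have -> : (6 + h - (h - 2 * m) = 2 * (3 + m))%N by lia.
by rewrite eq_sym tm_pairS.
Qed.

Lemma zw_HR h m : zw h (h + 2 + 2 * m) != zw h (h + 3 + 2 * m).
Proof.
rewrite /zw.
rewrite (_ : (h + 2 + 2 * m <= h)%N = false); last by apply/idP; lia.
rewrite (_ : (h + 3 + 2 * m <= h)%N = false); last by apply/idP; lia.
have -> : (6 + (h + 3 + 2 * m) - h = (2 * (4 + m)).+1)%N by lia.
have -> : (6 + (h + 2 + 2 * m) - h = 2 * (4 + m))%N by lia.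
by rewrite tm_pairS.
Qed.
Lemma DHL h m c : m = (h - 1 - 2 * c)%N -> (2 * c + 1 <= h)%N -> zw h m != zw h m.+1.
Proof. move=> -> hc. have := zw_HL hc. by have -> : (h - 1 - 2 * c).+1 = (h - 2 * c)%N by lia. Qed.

Lemma DHR h m c : m = (h + 2 + 2 * c)%N -> zw h m != zw h m.+1.
Proof. move=> ->. have := zw_HR h c. by have -> : (h + 2 + 2 * c).+1 = (h + 3 + 2 * c)%N by lia. Qed.

Lemma per_diff' f s n p m : per f s n p -> (s + p <= m)%N -> (m + 1 < s + n)%N ->
  f (m - p) != f (m - p).+1 -> f m != f m.+1.
Proof.
move=> P h1 h2 d. have := per_diff P (_ : s <= m - p)%N (_ : m - p + p + 1 < s + n)%N d.
have -> : (m - p + p = m)%N by lia. apply; lia.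
Qed.

Lemma D_oddL h s n p r m : p = (2 * r + 1)%N -> per (zw h) s n p ->
  (s + p <= m)%N -> (m + 2 <= h + 1)%N -> (h + 1 < s + n)%N -> zw h m != zw h m.+1.
Proof.
move=> hp P h1 h2 h3. have [c [hc|hc]] := parity (h - m).
- apply: (per_diff' P) => //; first lia. apply: (@DHL _ _ (c + r)); lia.
- apply: (@DHL _ _ c); lia.
Qed.

Lemma D_oddR h s n p r m : p = (2 * r + 1)%N -> per (zw h) s n p ->
  (h + 1 + p <= m)%N -> (s <= h + 1)%N -> (m + 1 < s + n)%N -> zw h m != zw h m.+1.
Proof.
move=> hp P h1 h2 h3. have [c [hc|hc]] := parity (m - h).
- apply: (@DHR _ _ (c - 1)); lia.
- apply: (per_diff' P) => //; first lia. apply: (@DHR _ _ (c - 1 - r)); lia.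
Qed.

Lemma D_evenR h s n p r m : p = (2 * r)%N -> per (zw h) s n p ->
  (h + 2 <= m)%N -> (s + p <= m)%N -> (m + 1 <= h + p)%N -> (m + 1 < s + n)%N ->
  zw h m != zw h m.+1.
Proof.
move=> hp P h1 h2 h3 h4. have [c [hc|hc]] := parity (m - h).
- apply: (@DHR _ _ (c - 1)); lia.
- apply: (per_diff' P) => //. apply: (@DHL _ _ (r - 2 - (c - 1))); lia.
Qed.

Lemma overlap_from_D h a :
  (forall t, (t <= 3)%N -> zw h (a + t) != zw h (a + t).+1) ->
  forall k, (k <= 2)%N -> zw h (a + k) = zw h (a + k + 2).
Proof.
move=> D. apply: alt_overlap.
- by have := D 0 isT; rewrite addn0.
- by have := D 1 isT; rewrite addn1.
- by have := D 2 isT; rewrite addn2.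
- by have := D 3 isT; rewrite !addnS addn0.
Qed.

Lemma per_sub f s n p a : per f s n p -> (s <= a)%N -> (a + 2 * p < s + n)%N ->
  forall k, (k <= p)%N -> f (a + k) = f (a + k + p).
Proof.
move=> P h1 h2 k hk. have := P (a - s + k) ltac:(lia).
by have -> : (s + (a - s + k) = a + k)%N by lia.
Qed.

Lemma big_case h s n p : (27 <= p)%N -> (7 * p < 3 * n)%N -> (s <= h + 1)%N ->
  (h + 1 < s + n)%N -> per (zw h) s n p -> False.
Proof.
move=> hp hn hs1 hs2 P.
have [r [hr|hr]] := parity p.
-
  case: (boolP (maxn (h + 2) (s + p) + 4 <= minn (h + p) (s + n - 1))%N) => hab.
    set a := maxn (h + 2) (s + p).
    apply: (@zw_OR h a 2) => //; first lia.
    apply: overlap_from_D => t ht.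
    apply: (D_evenR hr P); lia.
  have [hE|hE] : (h + 1 <= s + 4 \/ s + n <= h + 6)%N by lia.
  + apply: (@zw_OR h (h + 1) p); [lia|lia|].
    apply: (per_sub P); lia.
  + apply: (@zw_OL h s p); [lia|lia|].
    apply: (per_sub P); lia.
-
  have L : (h + 1 <= s + p + 4)%N.
    rewrite leqNgt; apply/negP => hl.
    apply: (@zw_OL h (s + p) 2); [lia|lia|].
    apply: overlap_from_D => t ht.
    apply: (D_oddL hr P); lia.
  have R : (s + n <= h + p + 6)%N.
    rewrite leqNgt; apply/negP => hl.
    apply: (@zw_OR h (h + 1 + p) 2); [lia|lia|].
    apply: overlap_from_D => t ht.
    apply: (D_oddR hr P); lia.
  lia.
Qed.
Definition perb (f : nat -> bool) s n p :=
  all (fun k => f (s + k) == f (s + k + p)) (iota 0 (n - p)).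

Lemma perP f s n p : per f s n p -> perb f s n p.
Proof.
move=> P; apply/allP => k; rewrite mem_iota => hk; apply/eqP; apply: P; lia.
Qed.

Definition n0 p := (7 * p %/ 3 + 1)%N.

Definition fcheck :=
  all (fun p => all (fun t => ~~ perb (zw 64) (65 - t) (n0 p) p) (iota 0 (n0 p))) (iota 1 26).

Lemma fcheck_ok : fcheck.
Proof. by vm_compute. Qed.

Lemma core h s n p : (1 <= p)%N -> (7 * p < 3 * n)%N -> per (zw h) s n p -> False.
Proof.
move=> hp hn P0.
have hn0 : (7 * p < 3 * n0 p /\ n0 p <= n)%N by rewrite /n0; lia.
case: hn0 => hn1 hn2.
have P : per (zw h) s (n0 p) p by move=> k hk; apply: P0; lia.
have h2p : (2 * p < n0 p)%N by lia.
case: (ltnP h s) => hs.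
  apply: (zw_OR hp hs). apply: (per_sub P); lia.
case: (leqP (s + n0 p) (h + 1)) => hs2.
  apply: (@zw_OL h s p hp); [lia|]. apply: (per_sub P); lia.
case: (leqP 27 p) => hp27.
  apply: (big_case hp27 hn1 _ hs2 P); lia.
have hn0b : (n0 p <= 61)%N by rewrite /n0; lia.
have P' : per (zw 64) (65 - (h + 1 - s)) (n0 p) p.
  move=> k hk. have := P k hk.
  rewrite (zw_shift (j := s + k)); last by lia.
  rewrite (zw_shift (j := s + k + p)); last by lia.
  have -> : (s + k + 64 - h = 65 - (h + 1 - s) + k)%N by lia.
  by have -> : (s + k + p + 64 - h = 65 - (h + 1 - s) + k + p)%N by lia.
have := fcheck_ok. move/allP/(_ p). rewrite mem_iota => /(_ ltac:(lia)).
move/allP/(_ (h + 1 - s)). rewrite mem_iota => /(_ ltac:(lia)).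
by rewrite perP.
Qed.
From mathcomp Require Import lra.
Import Order.TTheory GRing.Theory Num.Theory.

Lemma foldr_max_le (s : seq rat) (c : rat) : (0 <= c)%R ->
  (forall x, x \in s -> (x <= c)%R) -> (foldr Num.max 0 s <= c)%R.
Proof.
elim: s => //= x s IH h0 H. rewrite ge_max H ?mem_head //= IH // => y hy.
by apply: H; rewrite in_cons hy orbT.
Qed.

Lemma le_foldr_max (s : seq rat) x : x \in s -> (x <= foldr Num.max 0 s)%R.
Proof.
elim: s => //= y s IH; rewrite in_cons => /orP [/eqP->|h]; rewrite le_max ?lexx //.
by rewrite IH // orbT.
Qed.

Lemma has_period_per u q : has_period u q -> per (nth false u) 0 (size u) q.
Proof.
move=> /forallP H k hk. have hk' : (k < size u)%N by lia.
have := H (Ordinal hk'). rewrite /= hk => /eqP. by rewrite !add0n.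
Qed.

Lemma factor_per h l i j q : (i + j <= l)%N ->
  has_period (take j (drop i (mkseq (zw h) l))) q -> per (zw h) i j q.
Proof.
move=> hij /has_period_per.
have hs : size (take j (drop i (mkseq (zw h) l))) = j.
  by rewrite size_takel // size_drop size_mkseq; lia.
rewrite hs => P k hk. have := P k hk. rewrite !add0n !nth_take; try lia.
rewrite !nth_drop !nth_mkseq; try lia. by rewrite addnA.
Qed.

Lemma exp_le h l v : v \in factors (mkseq (zw h) l) -> (exponent v <= 7%:R / 3%:R)%R.
Proof.
rewrite /factors size_mkseq => /allpairsPdep [i [j [hi hj ->]]].
move: hi hj; rewrite !mem_iota => hi hj.
set u := take j _.
have hs : size u = j by rewrite /u size_takel // size_drop size_mkseq; lia.
apply: foldr_max_le; first by [].
move=> x /mapP [q]; rewrite mem_filter mem_iota => /andP [hper hq] ->.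
have h3 : (3 * size u <= 7 * q)%N.
  rewrite leqNgt; apply/negP => hlt.
  apply: (@core h i (size u) q) => //; first lia.
  rewrite hs; apply: (factor_per (l := l)) => //; lia.
have hq0 : (0 < q%:R :> rat)%R by rewrite ltr0n; lia.
rewrite ler_pdivrMr //.
have : ((3 * size u)%:R <= (7 * q)%:R :> rat)%R by rewrite ler_nat.
rewrite !natrM => H. lra.
Qed.

Lemma zwL h d : (d <= h)%N -> zw h (h - d) = tm (6 + d).
Proof. move=> hd; rewrite /zw; case: ifP => hh; congr tm; lia. Qed.

Lemma zwR h d : zw h (h + d) = tm (6 + d).
Proof. rewrite /zw; case: ifP => hh; congr tm; lia. Qed.

Lemma center h : (3 <= h)%N ->
  take 7 (drop (h - 3) (mkseq (zw h) (2 * h + 1))) = [:: false; true; true; false; true; true; false].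
Proof.
move=> h3. apply: (@eq_from_nth _ false).
  by rewrite size_takel // size_drop size_mkseq; lia.
move=> k; rewrite size_takel ?size_drop ?size_mkseq; last lia.
move=> hk. rewrite nth_take // nth_drop nth_mkseq; last lia.
case: k hk => [|[|[|[|[|[|[|k]]]]]]] hk //=.
- by rewrite addn0 zwL.
- by rewrite (_ : h - 3 + 1 = h - 2)%N ?zwL //; lia.
- by rewrite (_ : h - 3 + 2 = h - 1)%N ?zwL //; lia.
- by rewrite (_ : h - 3 + 3 = h + 0)%N ?zwR //; lia.
- by rewrite (_ : h - 3 + 4 = h + 1)%N ?zwR //; lia.
- by rewrite (_ : h - 3 + 5 = h + 2)%N ?zwR //; lia.
- by rewrite (_ : h - 3 + 6 = h + 3)%N ?zwR //; lia.
Qed.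

Theorem mainTheorem3 (l : nat) :
  (7 <= l)%N -> odd l ->
  exists w : seq bool,
    [/\ size w = l, palindrome w & critical_exponent w = (7%:R / 3%:R)%R].
Proof.
move=> hl ho. set h := l./2.
have hlh : l = (2 * h + 1)%N by have := odd_double_half l; rewrite ho /h; lia.
exists (mkseq (zw h) l); split.
- by rewrite size_mkseq.
- apply/eqP; apply: (@eq_from_nth _ false); first by rewrite size_rev.
  move=> k; rewrite size_rev size_mkseq => hk.
  rewrite nth_rev size_mkseq // !nth_mkseq; try lia.
  rewrite /zw; case: ifP => h1; case: ifP => h2; congr tm; lia.
- apply/eqP; rewrite eq_le; apply/andP; split.
    apply: foldr_max_le => // x /mapP [u hu ->]. exact: exp_le hu.
  set u0 := take 7 (drop (h - 3) (mkseq (zw h) l)).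
  have hu : u0 \in factors (mkseq (zw h) l).
    rewrite /factors size_mkseq; apply/allpairsPdep; exists (h - 3), 7.
    by rewrite !mem_iota; split => //; lia.
  apply: le_trans (le_foldr_max (map_f exponent hu)).
  have hc : u0 = [:: false; true; true; false; true; true; false] by rewrite /u0 hlh center //; lia.
  rewrite hc /exponent; apply: le_foldr_max.
  have hp3 : has_period [:: false; true; true; false; true; true; false] 3.
    by apply/forallP => -[[|[|[|[|[|[|[|k]]]]]]] hk].
  apply: (map_f (fun q => (size [:: false; true; true; false; true; true; false])%:R / q%:R)%R).
  by rewrite mem_filter hp3.
Qed.
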